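(* Let $F(x)=\frac{1-x-\sqrt{1-2x-3x^2}}{2x^2}$ be the generating function of the Motzkin numbers $a_n=\sum_{i\ge0}\frac{1}{i+1}\binom{n}{2i}\binom{2i}{i}$. Let $k$ be a positive integer and $m\in\mathbb{N}$. Then $D_{2k,1-2k-m}(N)=0$ for $N=1,\dots,m+2k-1$, and $D_{2k,1-2k-m}(n+m+2k)=(-1)^{\binom{m+2k}{2}}D_{2k,1-2k+m}(n)$ for all $n\in\mathbb{N}$; $D_{2k-1,2-2k-m}(N)=0$ for $N=1,\dots,m+2k-2$, and $D_{2k-1,2-2k-m}(n+m+2k-1)=(-1)^{\binom{m+2k-1}{2}}D_{2k-1,2-2k+m}(n)$ for all $n\in\mathbb{N}$.
   Context: For a power series $F(x)=\sum_{n\ge0}a_nx^n$ and $K\ge1$, write $F(x)^K=\sum_{n\ge0}a_{K,n}x^n$ and set $a_{K,n}=0$ for $n<0$. For $M\in\mathbb{Z}$ and $K,N\in\mathbb{N}$ with $K\ge1$, define the shifted Hankel determinant $D_{K,M}(N)=\det(a_{K,i+j+M})_{i,j=0}^{N-1}$, with $D_{K,M}(0)=1$. $\mathbb{N}=\{0,1,2,\dots\}$. *)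

(* Defs.v *)
From mathcomp Require Import all_boot all_order all_algebra.
Set Implicit Arguments. Unset Strict Implicit. Unset Printing Implicit Defensive.
Import GRing.Theory Num.Theory.
Local Open Scope ring_scope.

(* Motzkin numbers a_n = sum_{i>=0} 1/(i+1) C(n,2i) C(2i,i)  (terms vanish for 2i>n) *)
Definition motzkin (n : nat) : rat :=
  \sum_(i < n.+1) ('C(n, i.*2) * 'C(i.*2, i))%:R / (i.+1)%:R.

(* F(x) = sum_n a_n x^n. The coefficient of x^n in F^K only depends on a_0..a_n,
   so it equals the coefficient of x^n in (truncation of F to degree n)^K. *)
Definition motzkin_trunc (n : nat) : {poly rat} := \poly_(i < n.+1) motzkin i.

Definition aK (K : nat) (n : int) : rat :=
  match n with
  | Posz p => ((motzkin_trunc p) ^+ K)`_p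
  | Negz _ => 0
  end.

Definition hankelD (K : nat) (M : int) (N : nat) : rat :=
  \det (\matrix_(i < N, j < N) aK K ((i + j)%:Z + M)).

(* Main.v *)
Require Import Defs.
From mathcomp Require Import all_boot all_order all_algebra.
From mathcomp Require Import ring zify lra.
Set Implicit Arguments. Unset Strict Implicit. Unset Printing Implicit Defensive.
Import GRing.Theory Num.Theory.
Local Open Scope ring_scope.

Definition eqm (N : nat) (p q : {poly rat}) := forall i, (i < N)%N -> p`_i = q`_i.

Lemma eqm_refl N p : eqm N p p. Proof. by []. Qed.
Lemma eqm_sym N p q : eqm N p q -> eqm N q p. Proof. by move=> h i /h ->. Qed.
Lemma eqm_trans N p q r : eqm N p q -> eqm N q r -> eqm N p r.
Proof. by move=> h1 h2 i hi; rewrite h1 // h2. Qed.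
Lemma eqm_le N N' p q : (N' <= N)%N -> eqm N p q -> eqm N' p q.
Proof. by move=> hN h i hi; apply: h; apply: leq_trans hN. Qed.
Lemma eqmD N p q p' q' : eqm N p q -> eqm N p' q' -> eqm N (p + p') (q + q').
Proof. by move=> h h' i hi; rewrite !coefD h // h'. Qed.
Lemma eqmN N p q : eqm N p q -> eqm N (- p) (- q).
Proof. by move=> h i hi; rewrite !coefN h. Qed.
Lemma eqmB N p q p' q' : eqm N p q -> eqm N p' q' -> eqm N (p - p') (q - q').
Proof. by move=> h h'; apply: eqmD => //; apply: eqmN. Qed.
Lemma eqmM N p q p' q' : eqm N p q -> eqm N p' q' -> eqm N (p * p') (q * q').
Proof.
move=> h h' i hi; rewrite !coefM; apply: eq_bigr => j _.
have hj : (j < N)%N by apply: leq_ltn_trans hi; rewrite -ltnS.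
rewrite h // h' //; apply: leq_ltn_trans hi; exact: leq_subr.
Qed.
Lemma eqmX N p q k : eqm N p q -> eqm N (p ^+ k) (q ^+ k).
Proof. by move=> h; elim: k => [|k ih]; rewrite ?expr0 // !exprS; apply: eqmM. Qed.
Lemma eqm0 N p : eqm N p 0 <-> take_poly N p = 0.
Proof.
split=> [h|h i hi].
  by apply/polyP => i; rewrite coef_take_poly coef0; case: ifP => // /h ->; rewrite coef0.
by have := congr1 (fun r : {poly rat} => r`_i) h; rewrite coef_take_poly hi coef0.
Qed.
Lemma eqm_sub N p q : eqm N (p - q) 0 -> eqm N p q.
Proof. by move=> h i hi; move: (h i hi); rewrite coefB coef0 => /eqP; rewrite subr_eq0 => /eqP. Qed.
Lemma eqm_subr N p q : eqm N p q -> eqm N (p - q) 0.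
Proof. by move=> h i hi; rewrite coefB coef0 h // subrr. Qed.
Lemma eqmXnM N r : eqm N ('X^N * r) 0.
Proof. by move=> i hi; rewrite coefXnM hi coef0. Qed.
Lemma eqm_comp N p q (Y : {poly rat}) : Y`_0 = 0 -> eqm N p q -> eqm N (p \Po Y) (q \Po Y).
Proof.
move=> hY h; apply: eqm_sub.
have hd : p - q = drop_poly N (p - q) * 'X^N.
  by rewrite -{1}(poly_take_drop N (p - q)) (proj1 (eqm0 _ _) (eqm_subr h)) add0r.
have hY1 : Y = drop_poly 1 Y * 'X.
  rewrite -{1}(poly_take_drop 1 Y) expr1; suff -> : take_poly 1 Y = 0 by rewrite add0r.
  by apply/(eqm0 1 Y) => i; rewrite ltnS leqn0 => /eqP ->; rewrite hY coef0.
rewrite -comp_polyB hd comp_polyM (rmorphXn (comp_poly Y)) /= comp_polyX hY1 exprMn mulrA mulrC.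
exact: eqmXnM.
Qed.

Definition catn (i : nat) : rat := ('C(i.*2, i))%:R / (i.+1)%:R.

Lemma bin_rec_nat i : (i.+1 * 'C(i.*2.+2, i.+1) = 2 * (i.*2.+1) * 'C(i.*2, i))%N.
Proof.
have h1 := mul_bin_diag (i.*2.+2) i.
have h2 := mul_bin_diag (i.*2.+1) i.
have h3 : 'C(i.*2.+1, i.+1) = 'C(i.*2.+1, i).
  rewrite -bin_sub; last by lia.
  by congr binomial; lia.
rewrite /= in h1 h2; rewrite h3 in h2.
have : (i.+1 * (i.+1 * 'C(i.*2.+2, i.+1)) = i.+1 * (2 * i.*2.+1 * 'C(i.*2, i)))%N.
  move: h1 h2; set a := 'C(_, i.+1); set b := 'C(_, i); set c := 'C(_, i).
  nia.
by move/eqP; rewrite eqn_mul2l /= => /eqP.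
Qed.

Lemma cat_rec i : (i.+2)%:R * catn i.+1 = (4 * i + 2)%:R * catn i.
Proof.
rewrite /catn.
have h := bin_rec_nat i.
have e : (4 * i + 2 = 2 * i.*2.+1)%N by lia.
rewrite e mulrA [_ * 'C(_,_)%:R]mulrC natrM mulfK ?pnatr_eq0 //.
rewrite -[i.+1.*2]/(i.*2.+2) mulrA -natrM -natrM -h natrM mulrC mulKf ?pnatr_eq0 //.
Qed.

Lemma cat0 : catn 0 = 1.
Proof. by rewrite /catn /= divr1. Qed.
Lemma cat1 : catn 1 = 1.
Proof. by rewrite /catn /= divff // pnatr_eq0. Qed.

Definition Cp N : {poly rat} := \poly_(i < N) catn i.

Lemma coef_XD (R : nzRingType) (p : {poly R}) n : ('X * p^`())`_n = p`_n *+ n.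
Proof. by rewrite coefXM coef_deriv; case: n. Qed.

Lemma ode_aux (a b : rat) j : (j.+3)%:R * a = (4 * j.+1 + 2)%:R * b ->
  a *+ j.+2 - b *+ j.+1 *+ 4 = 0 - a + b *+ 2.
Proof.
move=> h; apply/eqP; rewrite -subr_eq0; apply/eqP.
transitivity ((j.+3)%:R * a - (4 * j.+1 + 2)%:R * b); first ring.
by rewrite h subrr.
Qed.

Lemma cat_ode N : eqm N ('X * (Cp N)^`() - ('X * ('X * (Cp N)^`())) *+ 4)
                        (1 - Cp N + ('X * Cp N) *+ 2).
Proof.
move=> n hn.
rewrite coefB coefMn coef_XD coefXM coef_XD coefD coefB coefMn coefXM coef1 /Cp.
case: n hn => [|[|j]] hn; rewrite !coef_poly ?hn ?(ltnW hn).
- rewrite cat0 eqxx /= !mul0rn. lra.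
- rewrite [(1 == 0)%N]/= [_.-1]/= cat0 cat1 /= mul0rn. ring.
rewrite -[j.+2.-1]/(j.+1) -[j.+2 == 0%N]/false -[(j.+2 == 0)%:R]/(0%:R) /=.
exact: (ode_aux (cat_rec j.+1)).
Qed.

Lemma cat_quad N : eqm N ('X * (Cp N * Cp N) - Cp N + 1) 0.
Proof.
set C := Cp N; set Q := 'X * (C * C) - C + 1.
set Z := 'X * Q^`() - ('X * ('X * Q^`())) *+ 4 + Q.
have e1 : Z = ('X - ('X * 'X) *+ 4) * (C * C)
     + (('X * C) *+ 2 - 1) * ('X * C^`() - ('X * ('X * C^`())) *+ 4) + Q.
  rewrite /Z /Q !derivE; ring.
have hZ : eqm N Z 0.
  rewrite e1; apply: (@eqm_trans _ _ (('X - ('X * 'X) *+ 4) * (C * C)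
     + (('X * C) *+ 2 - 1) * (1 - C + ('X * C) *+ 2) + Q)).
    apply: eqmD => //; apply: eqmD => //; apply: eqmM => //; exact: cat_ode.
  suff -> : ('X - ('X * 'X) *+ 4) * (C * C)
     + (('X * C) *+ 2 - 1) * (1 - C + ('X * C) *+ 2) + Q = 0 by [].
  rewrite /Q; ring.
have hQ0 : (0 < N)%N -> Q`_0 = 0.
  move=> hN; rewrite /Q coefD coefB coefXM coef1 /C /Cp coef_poly hN cat0 /=; ring.
move=> n; elim: n => [|n ih] hn; first by rewrite hQ0 ?coef0.
have := hZ _ hn; rewrite coef0 /Z coefD coefB coefMn coef_XD coefXM coef_XD.
rewrite -[n.+1 == 0%N]/false /= ih ?coef0; last exact: ltnW.
by rewrite !mul0rn subr0 -mulrSr => /eqP; rewrite mulrn_eq0 /= => /eqP.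
Qed.

Definition Rg N : {poly rat} := \sum_(i < N) 'X^i.

Lemma Rg_inv N : eqm N ((1 - 'X) * Rg N) 1.
Proof.
have -> : (1 - 'X) * Rg N = 1 - 'X^N.
  elim: N => [|N ih]; first by rewrite /Rg big_ord0 mulr0 expr0 subrr.
  rewrite /Rg big_ord_recr /= mulrDr -/(Rg N) ih exprS; ring.
by move=> i hi; rewrite coefB coefXn (ltn_eqF hi) subr0.
Qed.

Lemma coef_Rg N m : (m < N)%N -> (Rg N)`_m = 1.
Proof.
move=> hm; rewrite /Rg coef_sum (bigD1 (Ordinal hm)) //= coefXn eqxx big1 ?addr0 //.
by move=> j hj; rewrite coefXn; case: eqP => // e; case/eqP: hj; apply: val_inj.
Qed.

Lemma coef_RgX N k m : (m < N)%N -> (Rg N ^+ k.+1)`_m = ('C(m + k, k))%:R.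
Proof.
elim: k m => [|k ih] m hm; first by rewrite expr1 coef_Rg // bin0.
have hc : eqm N ((1 - 'X) * Rg N ^+ k.+2) (Rg N ^+ k.+1).
  rewrite exprS mulrA -[X in eqm _ _ X]mul1r; apply: eqmM => //; exact: Rg_inv.
elim: m hm => [|m ihm] hm.
  have := hc 0%N hm; rewrite mulrBl mul1r coefB coefXM /= subr0 => ->.
  by rewrite ih // !add0n !binn.
have := hc m.+1 hm; rewrite mulrBl mul1r coefB coefXM /= => /eqP.
rewrite subr_eq => /eqP ->; rewrite ihm ?(ltnW hm) // ih // -natrD.
rewrite !(addSn, addnS) (binS (m + k).+1) (binS (m + k) k); congr (_%:R); lia.
Qed.

Definition Fp N : {poly rat} := \poly_(i < N) motzkin i.
Definition Yp N : {poly rat} := 'X^2 * Rg N ^+ 2.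

Lemma Cp_comp N : Cp N \Po Yp N = \sum_(i < N) catn i *: Yp N ^+ i.
Proof.
rewrite /Cp poly_def raddf_sum; apply: eq_bigr => i _.
by rewrite /= comp_polyZ (rmorphXn (comp_poly (Yp N))) /= comp_polyX.
Qed.

Lemma motzkinE n : motzkin n = \sum_(i < n.+1) ('C(n, i.*2))%:R * catn i.
Proof. by apply: eq_bigr => i _; rewrite /catn natrM mulrA. Qed.

Lemma Phi_F N : eqm N (Rg N * (Cp N \Po Yp N)) (Fp N).
Proof.
move=> n hn; rewrite Cp_comp mulr_sumr coef_sum /Fp coef_poly hn motzkinE.
have e : forall i : 'I_N, (Rg N * (catn i *: Yp N ^+ i))`_n = ('C(n, i.*2))%:R * catn i.
  move=> i; rewrite -scalerAr coefZ mulrC; congr (_ * _).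
  rewrite /Yp exprMn -!exprM mulrCA -exprS coefXnM.
  case: ltnP => h; first by rewrite bin_small // -muln2 mulnC.
  by rewrite coef_RgX ?(leq_ltn_trans (leq_subr _ _) hn) // subnK // -muln2 mulnC.
rewrite (eq_bigr (fun i : 'I_N => ('C(n, i.*2))%:R * catn i)); last by move=> i _; apply: e.
rewrite (big_ord_widen_cond N (fun i => true) (fun i => ('C(n, i.*2))%:R * catn i) hn).
rewrite [RHS]big_mkcond /=; apply: eq_bigr => i _; case: ifP => // /negbT; rewrite -leqNgt => h.
by rewrite bin_small ?mul0r // -muln2; lia.
Qed.

Lemma motzkin_quad N : eqm N (Fp N * (1 - 'X - 'X^2 * Fp N)) 1.
Proof.
set C' := Cp N \Po Yp N; set R := Rg N.
have hP := eqm_sym (@Phi_F N).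
apply: (@eqm_trans _ _ (R * C' * (1 - 'X - 'X^2 * (R * C')))).
  by apply: eqmM => //; apply: eqmB => //; apply: eqmM.
have e1 : R * C' * (1 - 'X - 'X^2 * (R * C')) = C' * ((1 - 'X) * R) - Yp N * (C' * C').
  by rewrite /Yp /C' /R; ring.
rewrite e1.
apply: (@eqm_trans _ _ (C' * 1 - Yp N * (C' * C'))).
  by apply: eqmB => //; apply: eqmM => //; apply: Rg_inv.
have e2 : C' * 1 - Yp N * (C' * C') = 1 - (('X * (Cp N * Cp N) - Cp N + 1) \Po Yp N).
  rewrite comp_polyD comp_polyB comp_polyM comp_polyM comp_polyX -/C' comp_polyC; ring.
rewrite e2 -[X in eqm _ _ X]subr0; apply: eqmB => //.
have -> : 0 = (0 : {poly rat}) \Po Yp N by rewrite comp_poly0.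
apply: eqm_comp; last exact: cat_quad.
by rewrite /Yp coefXnM.
Qed.

Definition Jmx n : 'M[rat]_n := \matrix_(i < n, j < n) ((i + j).+1 == n)%:R.

Lemma det_Jmx n : \det (Jmx n) = (-1) ^+ 'C(n, 2).
Proof.
elim: n => [|n ih]; first by rewrite det_mx00.
rewrite (expand_det_row _ ord0) (bigD1 ord_max) //= big1 ?addr0; last first.
  move=> j hj; rewrite /Jmx mxE /= add0n eqSS.
  suff -> : (j == n :> nat) = false by rewrite mul0r.
  by apply/negbTE; apply: contra hj => /eqP e; apply/eqP/val_inj.
rewrite /Jmx mxE /= add0n eqxx mul1r /cofactor /= add0n.
have -> : row' ord0 (col' ord_max (\matrix_(i < n.+1, j < n.+1) ((i + j).+1 == n.+1)%:R)) = Jmx n.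
  apply/matrixP => i j; rewrite !mxE /= /bump /= !add1n.
  rewrite leqNgt ltn_ord /= add0n addSn eqSS //.
rewrite ih -exprD; congr (_ ^+ _).
by rewrite binS bin1 addnC.
Qed.

Lemma sum_trunc (F : nat -> rat) a b : (a <= b)%N ->
  (forall t, (a < t)%N -> F t = 0) ->
  \sum_(t < b.+1) F t = \sum_(t < a.+1) F t.
Proof.
move=> hab hF; rewrite (big_ord_widen b.+1 F (hab : (a.+1 <= b.+1)%N)) [RHS]big_mkcond /=.
by apply: eq_bigr => i _; case: ifP => // /negbT; rewrite -leqNgt => h; rewrite hF.
Qed.

Section Conv.
Variables (g : int -> rat) (h : nat -> rat) (Bd : nat).
Hypothesis hg : forall k, g (Negz k) = 0.
Hypothesis hc : forall s, (s < Bd)%N ->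
  \sum_(t < s.+1) g (Posz (s - t)%N) * h t = (s == 0)%:R.

Lemma g_neg x : x < 0 -> g x = 0.
Proof. by case: x. Qed.

Lemma conv_shift (S : int) (l : nat) : S <= l%:Z -> (l < Bd)%N ->
  \sum_(t < l.+1) g (S - t%:Z) * h t = (S == 0)%:R.
Proof.
case: S => [s|k] hs hl.
  rewrite lez_nat in hs.
  rewrite (@sum_trunc (fun t => g (s%:Z - t%:Z) * h t) s l hs); last first.
    by move=> t ht; rewrite g_neg ?mul0r //; lia.
  rewrite -hc; last exact: leq_ltn_trans hl.
  by apply: eq_bigr => t _; rewrite subzn // -ltnS.
rewrite big1 // => t _; rewrite g_neg ?mul0r //; lia.
Qed.

Lemma conv_tail (l p n : nat) : (p < n)%N -> (l + p.+1 < Bd)%N ->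
  \sum_(t < l.+1) g ((l + p.+1)%N%:Z - t%:Z) * h t =
  - \sum_(r < n) (if (r <= p)%N then g (Posz (p - r)%N) else 0) * h (l.+1 + r).
Proof.
move=> hpn hB; set s := (l + p.+1)%N.
have H := hc hB; rewrite -/s (_ : (s == 0)%N = false) in H; last by rewrite /s addnS.
have e1 : \sum_(t < s.+1) g (Posz (s - t)%N) * h t =
  \sum_(t < l.+1) g (s%:Z - t%:Z) * h t +
  \sum_(r < p.+1) g (Posz (p - r)%N) * h (l.+1 + r).
  rewrite -(big_mkord (n:=s.+1) (fun _ => true) (fun t => g (Posz (s - t)%N) * h t)).
  rewrite -(big_mkord (n:=l.+1) (fun _ => true) (fun t => g (s%:Z - t%:Z) * h t)).
  rewrite -(big_mkord (n:=p.+1) (fun _ => true) (fun r => g (Posz (p - r)%N) * h (l.+1 + r))).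
  rewrite (big_cat_nat _ (n := l.+1)) /=; last 2 first.
  - by [].
  - by rewrite /s; lia.
  congr (_ + _).
    rewrite !big_nat; apply: eq_bigr => t ht; rewrite subzn //; lia.
  rewrite -{1}[l.+1]add0n big_addn /s.
  have -> : ((l + p.+1).+1 - l.+1 = p.+1)%N by lia.
  rewrite !big_nat; apply: eq_bigr => r hr; rewrite addnC; congr (g (Posz _) * h _); lia.
have e2 : \sum_(r < n) (if (r <= p)%N then g (Posz (p - r)%N) else 0) * h (l.+1 + r)
   = \sum_(r < p.+1) g (Posz (p - r)%N) * h (l.+1 + r).
  rewrite -(prednK (leq_ltn_trans (leq0n p) hpn)).
  rewrite (@sum_trunc (fun r => (if (r <= p)%N then g (Posz (p - r)%N) else 0) * h (l.+1 + r)) p n.-1); last 2 first.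
  - by rewrite -ltnS prednK //; apply: leq_ltn_trans hpn.
  - by move=> t ht; rewrite leqNgt ht mul0r.
  by apply: eq_bigr => r _; rewrite -ltnS ltn_ord.
rewrite e2; apply/eqP; rewrite -addr_eq0 -e1 H //.
Qed.
End Conv.

Section Main.
Variables (g : int -> rat) (h : nat -> rat) (L n : nat) (M' : int).
Hypothesis hg : forall k, g (Negz k) = 0.
Hypothesis hg0 : g 0 = 1.
Hypothesis hc : forall s, (s < (L.+1 + n).*2)%N ->
  \sum_(t < s.+1) g (Posz (s - t)%N) * h t = (s == 0)%:R.
Hypothesis hH : forall r, (r < n.*2)%N -> h (L.+2 + r) = - g (r%:Z + M').

Lemma h0 : h 0 = 1.
Proof.
have := hc (s := 0); rewrite big_ord1 /= hg0 mul1r => -> //.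
Qed.

Lemma hankel_main :
  \det (\matrix_(i < L.+1 + n, j < L.+1 + n) g ((i + j)%:Z + - (L%:Z))) =
  (-1) ^+ 'C(L.+1, 2) * \det (\matrix_(i < n, j < n) g ((i + j)%:Z + M')).
Proof.
set A := \matrix_(i < L.+1 + n, j < L.+1 + n) _.
pose U : 'M[rat]_(L.+1 + n) := \matrix_(j, l) if (j <= l)%N then h (l - j) else 0.
have dU : \det U = 1.
  rewrite -det_tr det_trig; last first.
    by apply/is_trig_mxP => i j hij; rewrite !mxE leqNgt hij.
  by rewrite big1 // => i _; rewrite !mxE leqnn subnn h0.
have -> : \det A = \det (A *m U) by rewrite det_mulmx dU mulr1.
have hBe : forall i l : 'I_(L.+1 + n),
    (A *m U) i l = \sum_(t < l.+1) g ((i + l)%:Z - L%:Z - t%:Z) * h t.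
  move=> i l; rewrite mxE.
  pose F := fun j : nat => g ((i + j)%:Z + - (L%:Z)) * (if (j <= l)%N then h (l - j) else 0).
  transitivity (\sum_(j < (L + n).+1) F j).
    by apply: eq_bigr => j _; rewrite !mxE.
  rewrite (@sum_trunc F l (L + n)); last 2 first.
  - by rewrite -ltnS; apply: ltn_ord.
  - by move=> t ht; rewrite /F leqNgt ht mulr0.
  rewrite (reindex_inj rev_ord_inj) /=; apply: eq_bigr => t _.
  rewrite /F subSS leq_subr subKn; last by rewrite -ltnS ltn_ord.
  congr (g _ * _); have := ltn_ord t; lia.
have Bd1 : forall l : 'I_(L.+1 + n), (l < (L.+1 + n).*2)%N.
  by move=> l; have := ltn_ord l; lia.
rewrite -[A *m U]submxK.
have -> : ursubmx (A *m U) = 0.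
  apply/matrixP => i j; rewrite [LHS]mxE [LHS]mxE hBe (conv_shift hg hc) /=;
    try by (have := ltn_ord i; have := ltn_ord j; lia).
  rewrite mxE; case: eqP => //; have := ltn_ord i; lia.
rewrite det_lblock.
have -> : ulsubmx (A *m U) = Jmx L.+1.
  apply/matrixP => i j; rewrite [LHS]mxE [LHS]mxE hBe (conv_shift hg hc) /=;
    try by (have := ltn_ord i; have := ltn_ord j; lia).
  rewrite mxE; congr (_%:R); apply/eqP/eqP; lia.
rewrite det_Jmx.
pose T : 'M[rat]_n := \matrix_(p, r) if (r <= p)%N then g (Posz (p - r)%N) else 0.
pose Hg : 'M[rat]_n := \matrix_(r, q) g ((r + q)%:Z + M').
have -> : drsubmx (A *m U) = - (T *m (- Hg)).
  apply/matrixP => p q; rewrite [LHS]mxE [LHS]mxE hBe /= mxE.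
  have e : ((L.+1 + p)%:Z + (L.+1 + q)%:Z - L%:Z) = ((L.+1 + q) + p.+1)%N%:Z by lia.
  rewrite e (conv_tail hc (n := n)) //; last by have := ltn_ord p; have := ltn_ord q; lia.
  congr (- _); rewrite mxE; apply: eq_bigr => r _; rewrite !mxE; congr (_ * _).
  have -> : ((L.+1 + q).+1 + r = L.+2 + (r + q))%N by lia.
  rewrite hH; last by have := ltn_ord r; have := ltn_ord q; lia.
  by congr (- g _); lia.
have dT : \det T = 1.
  rewrite det_trig; last by apply/is_trig_mxP => i j hij; rewrite !mxE leqNgt hij.
  by rewrite big1 // => i _; rewrite !mxE leqnn subnn hg0.
congr (_ * _).
rewrite -scaleN1r detZ det_mulmx dT mul1r -scaleN1r detZ mulrA -exprMn mulrNN mulr1 expr1n mul1r.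
by [].
Qed.
End Main.

Lemma aK_eq K p NN : (p < NN)%N -> aK K (Posz p) = (Fp NN ^+ K)`_p.
Proof.
move=> hp; rewrite /aK -/(Fp p.+1); apply: (@eqmX p.+1 _ _ K) => //.
by move=> i hi; rewrite /Fp !coef_poly hi (leq_trans hi hp).
Qed.

Lemma coef0X (p : {poly rat}) K : (p ^+ K)`_0 = p`_0 ^+ K.
Proof. by elim: K => [|K ih]; rewrite ?expr0 ?coef1 // !exprS coef0M ih. Qed.

Lemma aK0 K : aK K 0 = 1.
Proof.
rewrite (@aK_eq K 0 1) // coef0X /Fp coef_poly /= /motzkin big_ord1 /=.
by rewrite divr1 expr1n.
Qed.

Lemma powsum N (U W : {poly rat}) : U + W = 1 - 'X -> eqm N (U * W) ('X^2) ->
  forall K, exists2 s : {poly rat}, (forall j, (K < j)%N -> s`_j = 0) & eqm N (U ^+ K + W ^+ K) s.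
Proof.
move=> hs hp.
suff H : forall K, (exists2 s : {poly rat}, (forall j, (K < j)%N -> s`_j = 0) & eqm N (U ^+ K + W ^+ K) s) /\
                   (exists2 s : {poly rat}, (forall j, (K.+1 < j)%N -> s`_j = 0) & eqm N (U ^+ K.+1 + W ^+ K.+1) s).
  by move=> K; case: (H K).
elim=> [|K [[s0 hs0 e0] [s1 hs1 e1]]].
  split.
    exists (1 + 1) => [j hj|]; last by rewrite !expr0.
    by rewrite coefD coef1; case: j hj.
  exists (1 - 'X) => [j hj|]; last by rewrite !expr1 hs.
  by rewrite coefB coef1 coefX; case: j hj => [|[|j]].
split; first by exists s1.
exists ((1 - 'X) * s1 - 'X^2 * s0).
  move=> j hj; rewrite coefB mulrBl mul1r coefB coefXM coefXnM.
  case: j hj => [|[|j]] // hj /=.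
  rewrite (hs1 j.+2); last lia. rewrite (hs1 j.+1); last lia. rewrite hs0; last lia. by rewrite !subr0.
have -> : U ^+ K.+2 + W ^+ K.+2 = (U + W) * (U ^+ K.+1 + W ^+ K.+1) - (U * W) * (U ^+ K + W ^+ K).
  by rewrite !exprS; ring.
rewrite hs; apply: eqmB; apply: eqmM => //.
Qed.

Lemma zeroK K L N : (1 <= N <= L)%N -> hankelD K (- (L%:Z)) N = 0.
Proof.
case: N => [//|N] /andP [_ hN].
rewrite /hankelD (expand_det_row _ ord0) big1 // => j _.
rewrite mxE /= add0n; case e : (j%:Z - L%:Z) => [q|q]; last by rewrite mul0r.
by have := ltn_ord j; lia.
Qed.

Lemma mainK (K m : nat) (hK : (0 < K)%N) n :
  hankelD K (- (((K + m).-1)%:Z)) (((K + m).-1).+1 + n) =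
  (-1) ^+ 'C(((K + m).-1).+1, 2) * hankelD K (m%:Z + 1 - K%:Z) n.
Proof.
set L := (K + m).-1.
have hL : (L.+1 = K + m)%N by rewrite /L prednK //; lia.
pose NN := ((L.+1 + n).*2 + L.+3)%N.
set F := Fp NN.
set U := 1 - 'X - 'X^2 * F.
set W := 'X^2 * F.
have hFU : eqm NN (F * U) 1 := @motzkin_quad NN.
have hUW : eqm NN (U * W) ('X^2).
  have -> : U * W = (F * U) * 'X^2 by rewrite /W; ring.
  by rewrite -[X in eqm _ _ X]mul1r; apply: eqmM.
have hsum : U + W = 1 - 'X by rewrite /U /W subrK.
have [s hs es] := powsum hsum hUW K.
rewrite /hankelD.
apply: (@hankel_main (aK K) (fun t => (U ^+ K)`_t) L n (m%:Z + 1 - K%:Z)).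
- by [].
- exact: aK0.
- move=> s0 hs0.
  have e1 : \sum_(t < s0.+1) aK K (s0 - t)%N * (U ^+ K)`_t = ((U ^+ K) * (F ^+ K))`_s0.
    rewrite coefM; apply: eq_bigr => t _; rewrite mulrC (@aK_eq K _ NN) //.
    have := ltn_ord t; rewrite /NN; lia.
  rewrite e1 -exprMn mulrC (@eqmX NN _ 1 K hFU); last by rewrite /NN; lia.
  by rewrite expr1n coef1.
- move=> r hr.
  have hj : (L.+2 + r < NN)%N by rewrite /NN; lia.
  have := es _ hj; rewrite coefD hs; last by lia.
  move/eqP; rewrite addr_eq0 => /eqP ->; congr (- _).
  rewrite /W exprMn -exprM coefXnM.
  case: ltnP => hc.
    case e : (r%:Z + (m%:Z + 1 - K%:Z)) => [q|q] //; lia.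
  have -> : r%:Z + (m%:Z + 1 - K%:Z) = Posz (L.+2 + r - 2 * K)%N by lia.
  by rewrite (@aK_eq K _ NN) //; lia.
Qed.

Theorem corollary3p2 (k m : nat) (hk : (0 < k)%N) :
  ((forall N : nat, (1 <= N <= m + 2 * k - 1)%N ->
      hankelD (2 * k) (1 - (2 * k)%:Z - m%:Z) N = 0) /\
   (forall n : nat,
      hankelD (2 * k) (1 - (2 * k)%:Z - m%:Z) (n + m + 2 * k) =
      (-1) ^+ 'C(m + 2 * k, 2) * hankelD (2 * k) (1 - (2 * k)%:Z + m%:Z) n)) /\
  ((forall N : nat, (1 <= N <= m + 2 * k - 2)%N ->
      hankelD (2 * k - 1) (2 - (2 * k)%:Z - m%:Z) N = 0) /\
   (forall n : nat,
      hankelD (2 * k - 1) (2 - (2 * k)%:Z - m%:Z) (n + m + 2 * k - 1) =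
      (-1) ^+ 'C(m + 2 * k - 1, 2) * hankelD (2 * k - 1) (2 - (2 * k)%:Z + m%:Z) n)).
Proof.
have e1 : 1 - (2 * k)%:Z - m%:Z = - ((((2 * k) + m).-1)%:Z) by lia.
have e2 : 2 - (2 * k)%:Z - m%:Z = - ((((2 * k - 1) + m).-1)%:Z) by lia.
split; split.
- by move=> N hN; rewrite e1; apply: zeroK; lia.
- move=> n; rewrite e1 (_ : (n + m + 2 * k = ((2 * k + m).-1).+1 + n)%N); last by lia.
  rewrite mainK; last by lia.
  congr (_ ^+ _ * hankelD _ _ _); [congr 'C(_, 2); lia | lia].
- by move=> N hN; rewrite e2; apply: zeroK; lia.
- move=> n; rewrite e2 (_ : (n + m + 2 * k - 1 = ((2 * k - 1 + m).-1).+1 + n)%N); last by lia.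
  rewrite mainK; last by lia.
  congr (_ ^+ _ * hankelD _ _ _); [congr 'C(_, 2); lia | lia].
Qed.
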